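(* Let $\mathbb{F}\in\{\mathbb{R},\mathbb{C}\}$ and let $\Phi=\{\varphi_i\}_{i=1}^M\subseteq\mathbb{F}^N$ satisfy $\|\varphi_i\|=\sqrt{N/M}$ for every $i\in[M]$. Let $N\le k\le M$. Then $$CV_k(\Phi)\leq\sqrt{{M\choose k}{M-N\choose M-k}},$$ with equality if and only if $\Phi$ is a Parseval frame (i.e. $\Phi\Phi^*=I$) and $cv_k(\Phi_K)=\sqrt{{M\choose k}^{-1}{M-N\choose M-k}}$ for every $K\subseteq[M]$ with $|K|=k$.
   Context: $\Phi$ also denotes the $N\times M$ matrix with columns $\varphi_i$. For $K\subseteq[M]$, $\Phi_K$ is the submatrix of columns indexed by $K$. For an $N\times k$ matrix $F$ with $k\ge N$, $cv_k(F)=\sqrt{\det(FF^* )}$, and $CV_k(\Phi)=\sum_{|K|=k}cv_k(\Phi_K)$. *)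

(* Defs.v *)
From HB Require Import structures.
From mathcomp Require Import all_boot all_order all_algebra.
From mathcomp Require Import reals.
From mathcomp.real_closed Require Import complex.
Set Implicit Arguments. Unset Strict Implicit. Unset Printing Implicit Defensive.
Import Order.TTheory GRing.Theory Num.Theory.
Local Open Scope ring_scope.

(* Phi_K : the N x |K| submatrix of the columns of Phi indexed by K
   (in increasing order of the indices). *)
Definition subcols {T : Type} (N M : nat) (K : {set 'I_M}) (Phi : 'M[T]_(N, M))
  : 'M[T]_(N, #|K|) := colsub (fun j : 'I_#|K| => enum_val j) Phi.

Definition cvR {R : realType} (N n : nat) (F : 'M[R]_(N, n)) : R :=
  Num.sqrt (\det (F *m F^T)).
Definition CVR {R : realType} (N M k : nat) (Phi : 'M[R]_(N, M)) : R :=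
  \sum_(K : {set 'I_M} | #|K| == k) cvR (subcols K Phi).

Definition cvC {C : numClosedFieldType} (N n : nat) (F : 'M[C]_(N, n)) : C :=
  sqrtC (\det (F *m map_mx Num.conj (F^T))).
Definition CVC {C : numClosedFieldType} (N M k : nat) (Phi : 'M[C]_(N, M)) : C :=
  \sum_(K : {set 'I_M} | #|K| == k) cvC (subcols K Phi).

(* Main.v *)
Require Import Defs.
From HB Require Import structures.
From mathcomp Require Import all_boot all_order all_algebra.
From mathcomp Require Import reals.
From mathcomp.real_closed Require Import complex.
From mathcomp Require Import perm.
From mathcomp Require Import zify ring.
Set Implicit Arguments. Unset Strict Implicit. Unset Printing Implicit Defensive.
Import Order.TTheory GRing.Theory Num.Theory.
Local Open Scope ring_scope.

Lemma cs_sum (F : numFieldType) (I : finType) (P : pred I) (a : I -> F) :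
  (0 < #|P|)%N -> (forall i, P i -> a i \is Num.real) ->
  (\sum_(i | P i) a i) ^+ 2 <= #|P|%:R * \sum_(i | P i) a i ^+ 2 /\
  ((\sum_(i | P i) a i) ^+ 2 = #|P|%:R * \sum_(i | P i) a i ^+ 2 ->
     forall i, P i -> a i = (\sum_(i | P i) a i) / #|P|%:R).
Proof.
move=> Pn aR.
set s := \sum_(i | P i) a i; set q := \sum_(i | P i) a i ^+ 2.
set n : F := #|P|%:R; set m := s / n.
have n0 : n != 0 by rewrite pnatr_eq0 -lt0n.
have key : \sum_(i | P i) (a i - m) ^+ 2 = q - s ^+ 2 / n.
  have e i : (a i - m) ^+ 2 = a i ^+ 2 - (m *+ 2) * a i + m ^+ 2 by ring.
  rewrite (eq_bigr _ (fun i _ => e i)) big_split sumrB /= -mulr_sumr sumr_const.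
  rewrite -/s -/q -mulr_natr -/n /m; field; exact: n0.
have nn : forall j, P j -> 0 <= (a j - m) ^+ 2.
  move=> j Pj; apply: real_exprn_even_ge0 => //.
  apply: rpredB; first exact: aR.
  apply: rpredM; first by apply: rpred_sum => l /aR.
  by rewrite realV realn.
have ge0 : 0 <= \sum_(i | P i) (a i - m) ^+ 2 by apply: sumr_ge0.
have nge0 : 0 < n by rewrite ltr0n.
split.
  rewrite key subr_ge0 ler_pdivrMr // mulrC in ge0; exact: ge0.
move=> eq i Pi.
have z : \sum_(i | P i) (a i - m) ^+ 2 = 0.
  by rewrite key eq; field.
have := psumr_eq0P nn z Pi.
by move/eqP; rewrite sqrf_eq0 subr_eq0 => /eqP.
Qed.

Section Spec.
Variable C : numClosedFieldType.

Lemma gram_diag N n (F : 'M[C]_(N, n)) : exists X : 'rV[C]_N,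
  [/\ forall i, 0 <= X 0 i,
      \det (F *m map_mx Num.conj (F^T)) = \prod_i X 0 i,
      \tr (F *m map_mx Num.conj (F^T)) = \sum_i X 0 i &
      (F *m map_mx Num.conj (F^T) = 1%:M <-> forall i, X 0 i = 1)].
Proof.
set A := F *m map_mx Num.conj (F^T).
have nA : A \is normalmx.
  suff h : (A ^t*)%sesqui = A by apply/normalmxP; rewrite h.
  apply/matrixP => i j; rewrite !mxE rmorph_sum; apply: eq_bigr => l _.
  by rewrite !mxE rmorphM /= conjCK mulrC.
have eA := orthomx_spectralP nA.
set P := spectralmx A in eA; set X := spectral_diag A in eA.
have Pu : P \in unitmx by exact: spectral_unit.
have Pun : P \is unitarymx by exact: spectral_unitarymx.
have iP : invmx P = map_mx Num.conj (P^T) by rewrite invmx_unitary.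
have eD : diag_mx X = P *m A *m invmx P.
  by rewrite eA !mulmxA mulmxV // mul1mx -!mulmxA mulmxV // mulmx1.
exists X; split.
- move=> i; have := congr1 (fun D : 'M_N => D i i) eD => /=.
  rewrite mxE eqxx mulr1n => ->.
  have -> : P *m A *m invmx P = (P *m F) *m map_mx Num.conj ((P *m F)^T).
    by rewrite iP /A trmx_mul map_mxM !mulmxA.
  rewrite mxE; apply: sumr_ge0 => l _; rewrite !mxE; exact: mul_conjC_ge0.
- rewrite -det_diag eD !det_mulmx mulrAC -det_mulmx mulmxV // det1 mul1r //.
- transitivity (\tr (diag_mx X)); last by rewrite mxtrace_diag.
  by rewrite eD [RHS]mxtrace_mulC mulmxA mulVmx // mul1mx.
- split.
  + move=> A1 i; have := congr1 (fun D : 'M_N => D i i) eD => /=.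
    by rewrite mxE eqxx mulr1n => ->; rewrite A1 mulmx1 mulmxV // mxE eqxx.
  + move=> X1; rewrite eA.
    have -> : diag_mx X = 1%:M.
      by apply/matrixP => i j; rewrite !mxE X1; case: (i == j).
    by rewrite mulmx1 mulVmx.
Qed.

Lemma gram_bound N n (F : 'M[C]_(N, n)) :
  0 <= \det (F *m map_mx Num.conj (F^T)) /\
  (\tr (F *m map_mx Num.conj (F^T)) = N%:R ->
   \det (F *m map_mx Num.conj (F^T)) <= 1 /\
   (\det (F *m map_mx Num.conj (F^T)) = 1 -> F *m map_mx Num.conj (F^T) = 1%:M)).
Proof.
have [X [X0 -> -> eq1]] := gram_diag F.
split; first by apply: prodr_ge0 => i _.
move=> trN.
have := @leif_AGM C _ predT (fun i => X 0 i).
rewrite card_ord => /(_ (fun i _ => X0 i)) [le eqiff].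
have eS : \sum_(i in predT) X 0 i = N%:R by rewrite -trN; apply: eq_bigl.
have eP : \prod_(i in predT) X 0 i = \prod_i X 0 i by apply: eq_bigl.
case: N F X X0 eq1 trN le eqiff eS eP => [|N'] F X X0 eq1 trN le eqiff eS eP.
  split; first by rewrite big_ord0.
  by move=> _; apply/matrixP => [[]].
rewrite -eP; rewrite eS divff ?pnatr_eq0 // expr1n in le eqiff.
split=> // /eqP; rewrite eqiff => /forall_inP allq; apply/eq1 => i.
have : \sum_(j in predT) X 0 j = (N'.+1)%:R * X 0 i.
  rewrite (eq_bigr (fun=> X 0 i)); last first.
    by move=> j _; have /forall_inP := allq j isT; move/(_ i isT)/eqP.
  by rewrite sumr_const card_ord mulr_natl.
rewrite eS => /(congr1 (fun z => z / (N'.+1)%:R)).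
by rewrite divff ?pnatr_eq0 // mulrC mulKf ?pnatr_eq0.
Qed.
End Spec.

Lemma count_sup (T : finType) (A : {set T}) k : (#|A| <= k)%N ->
  #|[set K : {set T} | (A \subset K) && (#|K| == k)]| = 'C(#|T| - #|A|, k - #|A|).
Proof.
move=> leAk.
have cC : #|~: A| = (#|T| - #|A|)%N by rewrite -(cardsC A); lia.
rewrite -cC -cards_draws.
have -> : [set K : {set T} | (A \subset K) && (#|K| == k)] =
   (fun B => B :|: A) @: [set B : {set T} | B \subset ~: A & #|B| == (k - #|A|)%N].
  apply/setP => K; rewrite inE; apply/andP/imsetP.
  - move=> [sAK /eqP cK]; exists (K :\: A).
      rewrite inE; apply/andP; split.
        by apply/subsetP => x; rewrite !inE => /andP[].
      by rewrite cardsDS // cK.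
    apply/setP => x; rewrite !inE; case: (boolP (x \in A)) => xA /=.
      by rewrite (subsetP sAK).
    by rewrite orbF.
  - move=> [B]; rewrite inE => /andP[sBA /eqP cB] ->; split; first exact: subsetUr.
    rewrite cardsU.
    have -> : B :&: A = set0.
      apply/setP => x; rewrite !inE; case: (boolP (x \in B)) => xB //=.
      by have := subsetP sBA x xB; rewrite inE => /negbTE ->.
    by rewrite cards0 cB; apply/eqP; lia.
apply: card_in_imset => B1 B2; rewrite !inE => /andP[s1 _] /andP[s2 _] e.
apply/setP => x; have := congr1 (fun S : {set T} => x \in S) e => /=; rewrite !inE.
case: (boolP (x \in A)) => xA; last by rewrite !orbF.
have := subsetP s1 x; have := subsetP s2 x; rewrite !inE xA /=.
by move=> h2 h1 _; apply/idP/idP => [/h1|/h2].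
Qed.

Section Core.
Variable C : numClosedFieldType.
Variables N M : nat.
Variable Phi : 'M[C]_(N, M).

Definition Xm (j : 'I_M) : 'M[C]_N := \matrix_(a, b) (Phi a j * Num.conj (Phi b j)).
Definition cf (f : {ffun 'I_N -> 'I_M}) : C :=
  \det (\matrix_(a, b) (Phi a (f a) * Num.conj (Phi b (f a)))).

Lemma gram_sum (B : {set 'I_M}) :
  subcols B Phi *m map_mx Num.conj ((subcols B Phi)^T) = \sum_(j in B) Xm j.
Proof.
apply/matrixP => a b; rewrite !mxE summxE [RHS]big_enum_val /=.
by apply: eq_bigr => l _; rewrite !mxE.
Qed.

Lemma gram_full : Phi *m map_mx Num.conj (Phi^T) = \sum_(j in [set: 'I_M]) Xm j.
Proof.
apply/matrixP => a b; rewrite !mxE summxE.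
by apply: eq_big => [l|l _]; rewrite ?inE // !mxE.
Qed.

Lemma det_sumX (B : {set 'I_M}) :
  \det (\sum_(j in B) Xm j) =
  \sum_(f : {ffun 'I_N -> 'I_M}) (\prod_a ((f a \in B)%:R : C)) * cf f.
Proof.
rewrite /determinant.
under eq_bigr => s _.
  rewrite (eq_bigr (fun a => \sum_j ((j \in B)%:R * (Phi a j * Num.conj (Phi ((s : 'S_N) a) j))))); last first.
    move=> a _; rewrite summxE big_mkcond /=; apply: eq_bigr => j _.
    by rewrite !mxE; case: (j \in B); rewrite ?mul1r ?mul0r.
  rewrite bigA_distr_bigA mulr_sumr.
  over.
rewrite exchange_big /=; apply: eq_bigr => f _.
rewrite /cf /determinant mulr_sumr; apply: eq_bigr => s _.
rewrite big_split /= mulrCA; congr (_ * (_ * _)).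
by apply: eq_bigr => a _; rewrite mxE.
Qed.


Lemma cf_noninj (f : {ffun 'I_N -> 'I_M}) : ~~ injectiveb f -> cf f = 0.
Proof.
move=> /injectivePn [a1 [a2 ne12 e12]]; rewrite /cf.
have -> : \matrix_(a, b) (Phi a (f a) * Num.conj (Phi b (f a))) =
   diag_mx (\row_a Phi a (f a)) *m \matrix_(a, b) Num.conj (Phi b (f a)).
  by apply/matrixP => a b; rewrite mul_diag_mx !mxE.
rewrite det_mulmx [X in _ * X](determinant_alternate ne12) ?mulr0 //.
by move=> b; rewrite !mxE e12.
Qed.

Lemma prod_ind (B : {set 'I_M}) (f : {ffun 'I_N -> 'I_M}) :
  \prod_a ((f a \in B)%:R : C) = ([set f a | a : 'I_N] \subset B)%:R.
Proof.
case: (boolP (_ \subset B)) => H.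
  by apply: big1 => a _; rewrite (subsetP H) // imset_f ?inE.
have [y /imsetP [a _ ->] fa] := subsetPn H.
by rewrite (bigD1 a) //= (negbTE fa) mul0r.
Qed.

Lemma sum_det_sub k : (N <= k)%N ->
  \sum_(K : {set 'I_M} | #|K| == k) \det (\sum_(j in K) Xm j) =
  'C(M - N, k - N)%:R * \det (\sum_(j in [set: 'I_M]) Xm j).
Proof.
move=> leNk.
under eq_bigr => K _ do rewrite det_sumX.
rewrite det_sumX exchange_big mulr_sumr; apply: eq_bigr => f _.
case: (boolP (injectiveb f)) => injf; last by rewrite cf_noninj // !mulr0 big1 // => K _; rewrite mulr0.
rewrite -mulr_suml prod_ind subsetT mul1r; congr (_ * _).
under eq_bigr => K _ do rewrite prod_ind.
have cf : #|[set f a | a : 'I_N]| = N by rewrite card_imset ?cardsT ?card_ord //; apply/injectiveP.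
rewrite (eq_bigr (fun K : {set 'I_M} => if [set f a | a : 'I_N] \subset K then 1 else 0)); last by move=> K _; case: (_ \subset _).
rewrite -big_mkcondr /=.
have -> : 'C(M - N, k - N) = 'C(#|'I_M| - #|[set f a | a : 'I_N]|, k - #|[set f a | a : 'I_N]|) by rewrite cf card_ord.
rewrite -count_sup ?cf // sumr_const; congr (_ *+ _).
by apply: eq_card => K; rewrite !inE andbC.
Qed.

End Core.

Lemma core (C : numClosedFieldType) N M k (hNk : (N <= k)%N) (hkM : (k <= M)%N)
  (Phi : 'M[C]_(N, M)) :
  (forall i : 'I_M, \sum_(j < N) `|Phi j i| ^+ 2 = N%:R / M%:R) ->
  CVC k Phi <= sqrtC ('C(M, k)%:R * 'C(M - N, M - k)%:R)
  /\ (CVC k Phi = sqrtC ('C(M, k)%:R * 'C(M - N, M - k)%:R) <->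
     (Phi *m map_mx Num.conj (Phi^T) = 1%:M /\
      forall K : {set 'I_M}, #|K| = k ->
        cvC (subcols K Phi) = sqrtC ('C(M, k)%:R^-1 * 'C(M - N, M - k)%:R))).
Proof.
move=> hnorm.
set G := Phi *m map_mx Num.conj (Phi^T).
have trN : \tr G = N%:R.
  rewrite /G /mxtrace.
  transitivity (\sum_(l < M) \sum_(a < N) `|Phi a l| ^+ 2).
    rewrite exchange_big; apply: eq_bigr => a _; rewrite mxE.
    by apply: eq_bigr => l _; rewrite !mxE normCK.
  rewrite (eq_bigr _ (fun l _ => hnorm l)) sumr_const card_ord.
  case: M hkM Phi hnorm G => [|M'] hkM' Phi hnorm G.
    by have -> : N = 0%N by lia.
  by rewrite -[_ *+ M'.+1]mulr_natr divfK // pnatr_eq0.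
have [D0 /(_ trN) [D1 DP]] := gram_bound Phi.
set D := \det G in D0 D1 DP.
pose d (K : {set 'I_M}) := \det (\sum_(j in K) Xm Phi j).
have cvE K : cvC (subcols K Phi) = sqrtC (d K) by rewrite /cvC gram_sum.
have d0 K : 0 <= d K by rewrite /d -gram_sum; case: (gram_bound (subcols K Phi)).
set n := 'C(M, k); set c := 'C(M - N, M - k).
have cE : c = 'C(M - N, k - N).
  by rewrite /c -bin_sub; [congr 'C(_, _); lia | lia].
have Sd : \sum_(K : {set 'I_M} | #|K| == k) d K = c%:R * D.
  by rewrite cE /d sum_det_sub // /D /G gram_full.
have cardK : #|[pred K : {set 'I_M} | #|K| == k]| = n.
  by rewrite /n -[X in 'C(X, _)]card_ord -card_draws; apply: eq_card => K; rewrite !inE.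
have n0 : (0 < n)%N by rewrite /n bin_gt0.
have c0 : (0 < c)%N by rewrite /c bin_gt0; lia.
set a := fun K => cvC (subcols K Phi).
have a0 K : 0 <= a K by rewrite /a cvE sqrtC_ge0.
have a2 K : a K ^+ 2 = d K by rewrite /a cvE sqrtCK.
have Pn : (0 < #|[pred K : {set 'I_M} | #|K| == k]|)%N by rewrite cardK.
have [csle cseq] := @cs_sum C _ [pred K : {set 'I_M} | #|K| == k] a
   Pn (fun K _ => ger0_real (a0 K)).
rewrite cardK in csle cseq.
set s := \sum_(K : {set 'I_M} | #|K| == k) a K.
have CVE : CVC k Phi = s by [].
have es : \sum_(K | [pred K : {set 'I_M} | #|K| == k] K) a K = s by [].
rewrite es in csle cseq.
have sumsq : \sum_(K | [pred K : {set 'I_M} | #|K| == k] K) a K ^+ 2 = c%:R * D.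
  by rewrite -Sd; apply: eq_bigr => K _; rewrite a2.
rewrite sumsq in csle cseq.
have s0 : 0 <= s by apply: sumr_ge0.
have ncD : n%:R * (c%:R * D) <= n%:R * c%:R :> C.
  by rewrite ler_pM2l ?ltr0n // -[X in _ <= X]mulr1 ler_pM2l ?ltr0n.
have nc0 : 0 <= n%:R * c%:R :> C by rewrite mulr_ge0 ?ler0n.
have s2le : s ^+ 2 <= n%:R * c%:R := le_trans csle ncD.
have sle : s <= sqrtC (n%:R * c%:R).
  by rewrite -(sqrCK s0) ler_sqrtC // ?nnegrE ?exprn_ge0.
split=> //; rewrite CVE; split.
- move=> seq.
  have s2 : s ^+ 2 = n%:R * c%:R by rewrite seq sqrtCK.
  have e1 : n%:R * (c%:R * D) = n%:R * c%:R.
    by apply/le_anti; rewrite ncD /= -s2 csle.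
  have eD : D = 1.
    move: e1; rewrite mulrA -[X in _ = X]mulr1 => /mulfI; apply.
    by rewrite mulf_neq0 // pnatr_eq0 -lt0n.
  split; first exact: DP.
  move=> K cK.
  have -> : cvC (subcols K Phi) = s / n%:R.
    apply: (cseq _ K); last by rewrite inE cK.
    by rewrite eD mulr1 s2 mulrC.
  have q0 : 0 <= s / n%:R by rewrite divr_ge0 ?ler0n.
  rewrite -(sqrCK q0); congr sqrtC.
  rewrite expr_div_n s2; field.
  by rewrite pnatr_eq0 -lt0n.
- move=> [_ allK].
  pose t : C := sqrtC (n%:R^-1 * c%:R).
  have -> : s = n%:R * t.
    rewrite /s (eq_bigr (fun=> t)); last by move=> K /eqP cK; exact: allK.
    by rewrite sumr_const cardK mulr_natl.
  have t0 : 0 <= n%:R * t by rewrite mulr_ge0 ?ler0n ?sqrtC_ge0 ?mulr_ge0 ?invr_ge0 ?ler0n.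
  rewrite -(sqrCK t0); congr sqrtC.
  rewrite exprMn sqrtCK; field.
  by rewrite pnatr_eq0 -lt0n.
Qed.

Section Transfer.
Variable R : realType.
Local Notation rc := (real_complex R).

Lemma conj_rc (x : R) : Num.conj (rc x) = rc x.
Proof. exact: conjc_real. Qed.

Lemma sqrt_rc (x : R) : 0 <= x -> sqrtC (rc x) = rc (Num.sqrt x).
Proof.
move=> x0.
have h : 0 <= rc (Num.sqrt x) by rewrite ler0c sqrtr_ge0.
by rewrite -(sqrCK h) -rmorphXn sqr_sqrtr.
Qed.

Lemma gram_rc N n (F : 'M[R]_(N, n)) :
  map_mx rc F *m map_mx Num.conj ((map_mx rc F)^T) = map_mx rc (F *m F^T).
Proof.
rewrite map_mxM; congr (_ *m _); apply/matrixP => i j; rewrite !mxE.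
exact: conj_rc.
Qed.

Lemma cv_rc N n (F : 'M[R]_(N, n)) : rc (cvR F) = cvC (map_mx rc F).
Proof.
rewrite /cvC /cvR gram_rc det_map_mx.
have [+ _] := gram_bound (map_mx rc F); rewrite gram_rc det_map_mx ler0c => h.
by rewrite sqrt_rc.
Qed.

End Transfer.

Unset Implicit Arguments.

Theorem proposition19 (R : realType) (N M k : nat) (hNk : (N <= k)%N) (hkM : (k <= M)%N) :
  (* F = R *)
  (forall Phi : 'M[R]_(N, M),
     (forall i : 'I_M, Num.sqrt (\sum_(j < N) Phi j i ^+ 2) = Num.sqrt (N%:R / M%:R)) ->
     CVR k Phi <= Num.sqrt ('C(M, k)%:R * 'C(M - N, M - k)%:R)
     /\ (CVR k Phi = Num.sqrt ('C(M, k)%:R * 'C(M - N, M - k)%:R) <->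
         (Phi *m Phi^T = 1%:M /\
          forall K : {set 'I_M}, #|K| = k ->
            cvR (subcols K Phi) = Num.sqrt ('C(M, k)%:R^-1 * 'C(M - N, M - k)%:R))))
  /\
  (* F = C *)
  (forall Phi : 'M[R[i]]_(N, M),
     (forall i : 'I_M, sqrtC (\sum_(j < N) `|Phi j i| ^+ 2) = sqrtC (N%:R / M%:R)) ->
     CVC k Phi <= sqrtC ('C(M, k)%:R * 'C(M - N, M - k)%:R)
     /\ (CVC k Phi = sqrtC ('C(M, k)%:R * 'C(M - N, M - k)%:R) <->
         (Phi *m map_mx Num.conj (Phi^T) = 1%:M /\
          forall K : {set 'I_M}, #|K| = k ->
            cvC (subcols K Phi) = sqrtC ('C(M, k)%:R^-1 * 'C(M - N, M - k)%:R)))).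
Proof.
split; last first.
  by move=> Phi hn; apply: core => // i; apply: sqrtC_inj; exact: hn.
move=> Phi hn.
pose Psi := map_mx (real_complex R) Phi.
have hnC : forall i, \sum_(j < N) `|Psi j i| ^+ 2 = N%:R / M%:R.
  move=> i; have := hn i.
  have s0 : 0 <= \sum_(j < N) Phi j i ^+ 2 by apply: sumr_ge0 => j _; exact: sqr_ge0.
  have q0 : 0 <= N%:R / M%:R :> R by rewrite divr_ge0 ?ler0n.
  move=> /(congr1 (fun x => x ^+ 2)); rewrite !sqr_sqrtr // => e.
  transitivity ((real_complex R) (\sum_(j < N) Phi j i ^+ 2)).
    rewrite rmorph_sum; apply: eq_bigr => j _.
    by rewrite normCK !mxE conj_rc rmorphXn expr2.
  by rewrite e fmorph_div !rmorph_nat.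
have [le eq] := core hNk hkM hnC.
have subE K : subcols K Psi = map_mx (real_complex R) (subcols K Phi).
  by apply/matrixP => a b; rewrite !mxE.
have eCV : (real_complex R) (CVR k Phi) = CVC k Psi.
  rewrite /CVR /CVC rmorph_sum; apply: eq_bigr => K _.
  by rewrite subE -cv_rc.
have eB : (real_complex R) (Num.sqrt ('C(M, k)%:R * 'C(M - N, M - k)%:R)) =
          sqrtC ('C(M, k)%:R * 'C(M - N, M - k)%:R).
  by rewrite -sqrt_rc ?mulr_ge0 ?ler0n // rmorphM !rmorph_nat.
have eB' : (real_complex R) (Num.sqrt ('C(M, k)%:R^-1 * 'C(M - N, M - k)%:R)) =
          sqrtC ('C(M, k)%:R^-1 * 'C(M - N, M - k)%:R).
  by rewrite -sqrt_rc ?mulr_ge0 ?invr_ge0 ?ler0n // rmorphM fmorphV !rmorph_nat.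
split; first by rewrite -(lecR (CVR k Phi)) eCV eB.
have e1 : CVR k Phi = Num.sqrt ('C(M, k)%:R * 'C(M - N, M - k)%:R) <->
          CVC k Psi = sqrtC ('C(M, k)%:R * 'C(M - N, M - k)%:R).
  by rewrite -eCV -eB; split => [->//|]; exact: complexI.
rewrite e1 eq; split => -[P1 P2]; split.
- apply: (@map_mx_inj _ _ (real_complex R)); rewrite map_mx1 -gram_rc; exact: P1.
- move=> K cK; apply: complexI; rewrite cv_rc -subE eB'; exact: P2.
- by rewrite /Psi gram_rc P1 map_mx1.
- by move=> K cK; rewrite subE -cv_rc -eB' P2.
Qed.
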